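(* Let $\tau_i\in\tau_H$ be a HI-task in the multi-rate fluid model with earliest completion window $k_i$, and suppose $$\sum_{j:1\le j<k_i}\theta_{i,j}^H w_j\ \ge\ u_i^H\sum_{j:1\le j<k_i}w_j \qquad\text{and}\qquad \forall j:\ 1\le j<k_i,\ \ \theta_{i,j}^H\le\theta_{i,j+1}^H .$$ Then for every time instant $t$ (measured from the mode switch) with $0\le t\le \sum_{j:1\le j<k_i}w_j$, the total execution assigned to $\tau_i$ in the interval $[t,\sum_{j:1\le j<k_i}w_j]$ (i.e., the integral over this interval of $\tau_i$'s piecewise-constant transition rate, which equals $\theta_{i,j}^H$ on window $j$) is at least $\big(\sum_{j:1\le j<k_i}w_j-t\big)\,u_i^H$.
   Context: Dual-criticality implicit-deadline sporadic tasks: task $\tau_i$ has period/relative deadline $T_i>0$, WCETs $C_i^L\le C_i^H$, $u_i^H=C_i^H/T_i\le1$; $n_H$ is the number of HI-tasks. Multi-rate fluid model: in LO-mode each job of $\tau_i$ executes at rate $\theta_i^L\in(0,1]$; after the mode switch (time $0$), the transition period $[0,\sum_{j=1}^{n_H}w_j)$ is divided into consecutive windows of durations $w_1,\dots,w_{n_H}\ge0$, window $j$ being $[\sum_{l<j}w_l,\sum_{l\le j}w_l)$, in which HI-task $\tau_i$ executes at rate $\theta_{i,j}^H\in[0,1]$; afterwards it executes at rate $\theta_i^H$. By convention $\theta_{i,n_H+1}^H$ denotes $\theta_i^H$. The earliest completion window of $\tau_i$ is the largest index $k_i\in\{1,\dots,n_H+1\}$ with $\sum_{j:1\le j<k_i}w_j<T_i-C_i^L/\theta_i^L$.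 *)

(* Defs.v *)
From Stdlib Require Import Reals Lra Lia List.
Open Scope R_scope.

(* psum w k = sum_{j : 1 <= j < k} w j  (windows are indexed from 1). *)
Fixpoint psum (w : nat -> R) (k : nat) : R :=
  match k with
  | O => 0
  | S k' => psum w k' + (if Nat.eqb k' 0 then 0 else w k')
  end.

Definition overlap (a b c d : R) : R := Rmax 0 (Rmin b d - Rmax a c).

(* Rate of a HI-task at time s >= 0 after the mode switch:
   th j on window j = [psum w j, psum w (j+1)) for 1 <= j <= nH,
   th (nH+1) (= theta_i^H) afterwards. *)

(* Execution assigned in [a,b] (0 <= a <= b): the integral over [a,b] of the
   piecewise-constant rate above, written as the sum over its constant pieces
   of (rate) * (length of the piece inside [a,b]). *)
Definition exec (nH : nat) (w th : nat -> R) (a b : R) : R :=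
  fold_right Rplus 0
    (map (fun j => th j * overlap a b (psum w j) (psum w (S j))) (seq 1 nH))
  + th (S nH) * Rmax 0 (b - Rmax a (psum w (S nH))).

Definition earliest_completion_window (nH : nat) (w : nat -> R)
    (T CL thL : R) (k : nat) : Prop :=
  (1 <= k <= S nH)%nat /\ psum w k < T - CL / thL /\
  (forall k', (k < k' <= S nH)%nat -> ~ (psum w k' < T - CL / thL)).

(* Main.v *)
Require Import Defs.
From Stdlib Require Import Reals Lra Lia List Arith Compare_dec.
Open Scope R_scope.

Fixpoint sm (f : nat -> R) (n : nat) : R :=
  match n with O => 0 | S n' => sm f n' + f (S n') end.

Lemma fold_sm f n : fold_right Rplus 0 (map f (seq 1 n)) = sm f n.
Proof.
  induction n as [|n IH]; [simpl; auto|].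
  rewrite seq_S, map_app, fold_right_app; simpl.
  simpl sm. rewrite <- IH. replace (1 + n)%nat with (S n) by lia.
  generalize (f (S n)); intro r; clear IH.
  induction (map f (seq 1 n)); simpl; lra.
Qed.

Lemma psum_sm g n : psum g (S n) = sm g n.
Proof.
  induction n as [|n IHn]; [simpl; ring|].
  change (psum g (S n) + g (S n) = sm g n + g (S n)). rewrite IHn. reflexivity.
Qed.

Lemma sm_le f g n : (forall j, (1 <= j <= n)%nat -> f j <= g j) -> sm f n <= sm g n.
Proof.
  induction n; simpl; intros H; [lra|].
  assert (f (S n) <= g (S n)) by (apply H; lia).
  assert (sm f n <= sm g n) by (apply IHn; intros; apply H; lia). lra.
Qed.

Lemma sm_plus f g n : sm (fun j => f j + g j) n = sm f n + sm g n.
Proof. induction n; simpl; lra. Qed.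

Lemma sm_scal c f n : sm (fun j => c * f j) n = c * sm f n.
Proof. induction n; simpl; [lra|]. rewrite IHn; ring. Qed.

Lemma sm_minus f g n : sm (fun j => f j - g j) n = sm f n - sm g n.
Proof. induction n; simpl; lra. Qed.

Lemma sm_ext f g n : (forall j, (1 <= j <= n)%nat -> f j = g j) -> sm f n = sm g n.
Proof.
  induction n; simpl; intros H; auto.
  rewrite IHn by (intros; apply H; lia). rewrite H by lia. auto.
Qed.

Lemma sm_trunc f K n : (K <= n)%nat ->
  sm (fun j => if (j <=? K)%nat then f j else 0) n = sm f K.
Proof.
  induction n; intros H.
  - replace K with 0%nat by lia. reflexivity.
  - destruct (Nat.eq_dec K (S n)) as [ ->|Hne].
    + apply sm_ext. intros j Hj. destruct (Nat.leb_spec j (S n)); auto; lia.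
    + change (sm (fun j => if (j <=? K)%nat then f j else 0) n + (if (S n <=? K)%nat then f (S n) else 0) = sm f K).
      rewrite IHn by lia. destruct (Nat.leb_spec (S n) K); [lia|lra].
Qed.

Ltac rdec := unfold overlap, Rmax, Rmin in *;
  repeat match goal with
  | |- context[Rle_dec ?x ?y] => destruct (Rle_dec x y)
  | H : context[Rle_dec ?x ?y] |- _ => destruct (Rle_dec x y) end; lra.

Lemma ov_add a b c d e : a <= b -> c <= d -> d <= e ->
  overlap a b c d + overlap a b d e = overlap a b c e.
Proof. intros; rdec. Qed.

Lemma ov_cc a b c : a <= b -> overlap a b c c = 0.
Proof. intros; rdec. Qed.

Section S.
Variables (nH : nat) (w : nat -> R).
Hypothesis hw : forall j, (1 <= j <= nH)%nat -> 0 <= w j.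

Lemma psum_mono a b : (a <= b <= S nH)%nat -> psum w a <= psum w b.
Proof.
  induction b; intros H.
  - replace a with 0%nat by lia. lra.
  - destruct (Nat.eq_dec a (S b)) as [ ->|]; [lra|].
    simpl. assert (psum w a <= psum w b) by (apply IHb; lia).
    destruct (Nat.eqb_spec b 0); [lra|].
    assert (0 <= w b) by (apply hw; lia). lra.
Qed.

Lemma psum_S j : (1 <= j)%nat -> psum w (S j) = psum w j + w j.
Proof. intros; simpl. destruct (Nat.eqb_spec j 0); [lia|auto]. Qed.

Lemma sm_ov t P n : t <= P -> (n <= nH)%nat ->
  sm (fun j => overlap t P (psum w j) (psum w (S j))) n
  = overlap t P (psum w 1) (psum w (S n)).
Proof.
  intros HtP. induction n; intros Hn.
  - simpl sm. rewrite ov_cc; auto.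
  - change (sm (fun j => overlap t P (psum w j) (psum w (S j))) n + overlap t P (psum w (S n)) (psum w (S (S n))) = overlap t P (psum w 1) (psum w (S (S n)))).
    rewrite IHn by lia. apply ov_add; auto; apply psum_mono; lia.
Qed.
End S.

Lemma find_m (w : nat -> R) nH t : (forall j, (1 <= j <= nH)%nat -> 0 <= w j) ->
  forall n, (1 <= n <= nH)%nat -> 0 <= t -> t <= psum w (S n) ->
  exists m, (1 <= m <= n)%nat /\ psum w m <= t /\ t <= psum w (S m).
Proof.
  intros hw n. induction n; intros Hn Ht Ht2; [lia|].
  destruct (Nat.eq_dec n 0) as [ ->|Hn0].
  - exists 1%nat. simpl in *. split; [lia|lra].
  - destruct (Rle_dec t (psum w (S n))).
    + destruct IHn as [m Hm]; [lia|auto|auto|]. exists m; split; [lia|tauto].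
    + exists (S n). split; [lia|split; [lra|auto]].
Qed.

Theorem lemma1 (nH : nat) (T CL CH thL thH : R) (w th : nat -> R) (k : nat) (t : R) :
  (1 <= nH)%nat ->
  0 < T -> 0 <= CL -> CL <= CH -> CH / T <= 1 ->
  0 < thL <= 1 ->
  (forall j, (1 <= j <= nH)%nat -> 0 <= w j) ->
  (forall j, (1 <= j <= nH)%nat -> 0 <= th j <= 1) ->
  th (S nH) = thH -> 0 <= thH <= 1 ->
  earliest_completion_window nH w T CL thL k ->
  psum (fun j => th j * w j) k >= (CH / T) * psum w k ->
  (forall j, (1 <= j < k)%nat -> th j <= th (S j)) ->
  0 <= t <= psum w k ->
  exec nH w th t (psum w k) >= (psum w k - t) * (CH / T).
Proof.
  intros HnH HT HCL HCLH Hu HthL hw hth HthH HthH' [Hk _] Hsum Hmono Ht.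
  set (u := CH / T) in *. clearbody u.
  destruct k as [|K]; [lia|].
  set (P := psum w (S K)) in *.
  assert (HK : (K <= nH)%nat) by lia.
  assert (HPn : P <= psum w (S nH)) by (apply (psum_mono nH); auto; lia).
  set (l := fun j => overlap t P (psum w j) (psum w (S j))).
  unfold exec. rewrite fold_sm.
  assert (Hlast : Rmax 0 (P - Rmax t (psum w (S nH))) = 0)
    by (unfold Rmax; repeat match goal with |- context[Rle_dec ?x ?y] => destruct (Rle_dec x y) end; lra).
  rewrite Hlast, Rmult_0_r, Rplus_0_r.
  change (sm (fun j => th j * l j) nH >= (P - t) * u).
  assert (Hsl : sm l nH = P - t).
  { unfold l. rewrite (sm_ov nH); auto; try lra.
    replace (psum w 1) with 0 by (simpl; ring). rdec. }
  assert (Hl0 : forall j, (S K <= j <= nH)%nat -> l j = 0).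
  { intros j Hj. assert (P <= psum w j) by (apply (psum_mono nH); auto; lia).
    assert (psum w j <= psum w (S j)) by (apply (psum_mono nH); auto; lia).
    unfold l; rdec. }
  assert (Hlb : forall j, (1 <= j <= nH)%nat -> 0 <= l j <= w j).
  { intros j Hj. assert (H1 := psum_S w j ltac:(lia)). assert (0 <= w j) by auto.
    unfold l; rewrite H1; rdec. }
  destruct K as [|K'].
  -
    assert (Z : sm (fun _ => 0) nH = 0) by (clear; induction nH; simpl; lra).
    assert (sm l nH = 0) by (rewrite <- Z; apply sm_ext; intros; apply Hl0; lia).
    rewrite (sm_ext _ (fun _ => 0)).
    + replace (P - t) with 0 by lra. lra.
    + intros j Hj. rewrite Hl0 by lia. ring.
  - set (K := S K') in *.
    destruct (find_m w nH t hw K ltac:(lia) ltac:(apply Ht) ltac:(apply Ht)) as [m [Hm [Hm1 Hm2]]].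
    set (c := th m).
    assert (Hthle : forall a b, (1 <= a <= b)%nat -> (b <= K)%nat -> th a <= th b).
    { intros a b Hab HbK. induction b; [lia|].
      destruct (Nat.eq_dec a (S b)) as [ ->|]; [lra|].
      assert (th b <= th (S b)) by (apply Hmono; lia).
      assert (th a <= th b) by (apply IHb; lia). lra. }
    assert (T1 : forall j, (1 <= j <= nH)%nat -> c * l j <= th j * l j).
    { intros j Hj. destruct (lt_eq_lt_dec j m) as [[Hjm| ->]|Hjm].
      - assert (psum w (S j) <= psum w m) by (apply (psum_mono nH); auto; lia).
        assert (El : l j = 0) by (unfold l; rdec). rewrite El; lra.
      - unfold c; lra.
      - destruct (le_lt_dec j K).
        + assert (c <= th j) by (apply Hthle; lia).
          destruct (Hlb j Hj). apply Rmult_le_compat_r; auto.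
        + rewrite Hl0 by lia. lra. }
    set (w' := fun j => if (j <=? K)%nat then w j else 0).
    assert (T2 : forall j, (1 <= j <= nH)%nat ->
               th j * w' j - th j * l j <= c * w' j - c * l j).
    { intros j Hj. unfold w'. destruct (Nat.leb_spec j K).
      - destruct (lt_eq_lt_dec j m) as [[Hjm| ->]|Hjm].
        + assert (th j <= c) by (apply Hthle; lia). destruct (Hlb j Hj).
          assert (th j * (w j - l j) <= c * (w j - l j)) by (apply Rmult_le_compat_r; lra).
          lra.
        + unfold c; lra.
        + assert (psum w (S m) <= psum w j) by (apply (psum_mono nH); auto; lia).
          assert (psum w (S j) <= P) by (apply (psum_mono nH); auto; lia).
          assert (Hps := psum_S w j ltac:(lia)). assert (0 <= w j) by auto.
          assert (El : l j = w j) by (unfold l; rewrite Hps in *; rdec).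
          rewrite El; lra.
      - rewrite Hl0 by lia. lra. }
    assert (A1 := sm_le _ _ nH T1). rewrite sm_scal, Hsl in A1.
    assert (A2 := sm_le _ _ nH T2). rewrite !sm_minus, sm_scal, sm_scal in A2.
    assert (Ew : sm w' nH = P) by (unfold w', P; rewrite sm_trunc, psum_sm; auto).
    assert (Etw : sm (fun j => th j * w' j) nH = psum (fun j => th j * w j) (S K)).
    { rewrite psum_sm. rewrite <- (sm_trunc (fun j => th j * w j) K nH) by auto.
      apply sm_ext. intros j _. unfold w'. destruct (j <=? K)%nat; ring. }
    rewrite Ew, Etw, Hsl in A2.
    destruct (Rle_dec u c).
    + assert (u * (P - t) <= c * (P - t)) by (apply Rmult_le_compat_r; lra). lra.
    + assert (c * t <= u * t) by (apply Rmult_le_compat_r; lra). lra.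
Qed.
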